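(* Let $X$ be a topological space and $x\in X$ a point such that $\overline{U}=X$ for every open neighborhood $U$ of $x$. If $M$ is a maximal finitely non-Hausdorff subset of $X$, then $x\in M$.
   Context: A non-empty subset $A$ of $X$ is finitely non-Hausdorff if for every non-empty finite $F\subseteq A$ and every family $\{U_y:y\in F\}$ of open neighborhoods $U_y$ of $y$, $\bigcap_{y\in F}U_y\neq\emptyset$; it is maximal finitely non-Hausdorff if no finitely non-Hausdorff subset of $X$ properly contains it. *)

(* Defs.v *)
From HB Require Import structures.
From mathcomp Require Import all_boot all_order.
From mathcomp Require Import all_classical all_reals all_analysis.
Set Implicit Arguments. Unset Strict Implicit. Unset Printing Implicit Defensive.
Local Open Scope classical_set_scope.

Definition finitely_non_Hausdorff (X : topologicalType) (A : set X) : Prop :=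
  A !=set0 /\
  forall (F : set X) (U : X -> set X),
    finite_set F -> F `<=` A -> F !=set0 ->
    (forall y, F y -> open (U y) /\ U y y) ->
    (\bigcap_(y in F) U y) !=set0.

Definition maximal_finitely_non_Hausdorff (X : topologicalType) (A : set X) : Prop :=
  finitely_non_Hausdorff A /\
  forall B : set X, finitely_non_Hausdorff B -> A `<=` B -> B = A.

(* Main.v *)
Require Import Defs.
From HB Require Import structures.
From mathcomp Require Import all_boot all_order.
From mathcomp Require Import all_classical all_reals all_analysis.
Local Open Scope classical_set_scope.

Theorem lemma2p20 (X : topologicalType) (x : X) (M : set X) :
  (forall U : set X, open U -> U x -> closure U = setT) ->
  maximal_finitely_non_Hausdorff M ->
  M x.
Proof.
move=> Hd [[M0 HM] Hmax].
have HB : finitely_non_Hausdorff (M `|` [set x]).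
  split; first by case: M0 => m Mm; exists m; left.
  move=> F U Ffin FB F0 HU.
  case: (pselect (F x)) => Fx; last first.
    apply: HM => //.
    move=> y Fy; case: (FB y Fy) => // yx; by move: Fy; rewrite yx.
  set F' := F `\ x.
  have F'M : F' `<=` M.
    move=> y [Fy ynx]; case: (FB y Fy) => // yx; by exfalso; apply: ynx.
  case: (pselect (F' !=set0)) => F'0; last first.
    exists x => y Fy.
    have -> : y = x.
      apply: contrapT => ynx; apply: F'0; exists y; split => //.
    by case: (HU x Fx).
  have Ffin' : finite_set F' by apply: finite_setD.
  have [w Hw] := HM F' U Ffin' F'M F'0 (fun y Fy => HU y (proj1 Fy)).
  have [Uxo Uxx] := HU x Fx.
  have : closure (U x) w by rewrite (Hd _ Uxo Uxx).
  move=> /(_ (\bigcap_(y in F') U y)) [].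
    have [D eD] := (finite_fsetP.1 Ffin').
    rewrite eD; apply: filter_bigI => i iD.
    have F'i : F' i by rewrite eD; exact: iD.
    apply: open_nbhs_nbhs; split.
      by case: F'i => [Fi _]; case: (HU i Fi).
    by apply: Hw.
  move=> z [Uxz Hz]; exists z => y Fy.
  case: (pselect (y = x)) => [->|ynx] //.
  by apply: Hz; split.
have := Hmax _ HB (fun y My => or_introl My).
move=> <-; by right.
Qed.
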